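(* Let $n\ge1$, $\rho\in\mathbb{R}$ with $n+2-n\rho\neq 0$, and let $H_n$ be the $(2n+1)$-dimensional Heisenberg group with Lie algebra $\mathfrak{h}_n$ spanned by $e_1,\dots,e_{2n+1}$, whose only nonzero brackets are $[e_i,e_{n+i}]=e_{2n+1}$ ($1\le i\le n$). Let $g_0$ be a left-invariant metric, diagonal in this basis, with $g_I(0)=g_0(e_I,e_I)$, satisfying $g_{2n+1}(0)=g_i(0)g_{n+i}(0)$ for all $1\le i\le n$. Let $g(t)$ be the diagonal left-invariant metric with $g_j(t)=g_j(0)(1+bt)^{\frac{1-n\rho}{n+2-n\rho}}$ ($1\le j\le 2n$), $g_{2n+1}(t)=g_{2n+1}(0)(1+bt)^{\frac{n+n\rho}{n\rho-n-2}}$, $b=(n+2-n\rho)\frac{g_{2n+1}(0)}{g_1(0)g_{1+n}(0)}$, which is the solution of the Ricci–Bourguignon flow $\partial_t g=-2\mathrm{Ric}+2\rho Rg$ starting at $g_0$. Then $(H_n,g_0)$ is of Heisenberg type, but the Heisenberg type property is not preserved along $g(t)$: for $t\neq 0$ (with $1+bt>0$), $(\mathfrak{h}_n,g(t))$ is not of Heisenberg type.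
   Context: For a 2-step nilpotent Lie algebra $\mathcal{N}$ with inner product $\langle\cdot,\cdot\rangle$, let $\mathcal{Z}$ be its center and $\mathcal{V}$ the orthogonal complement of $\mathcal{Z}$. For $Z\in\mathcal{Z}$ define the skew-symmetric map $j(Z):\mathcal{V}\to\mathcal{V}$ by $\langle j(Z)X,Y\rangle=\langle Z,[X,Y]\rangle$ for all $X,Y\in\mathcal{V}$. $(\mathcal{N},\langle\cdot,\cdot\rangle)$ is of Heisenberg type if $j(Z)^2=-|Z|^2\,\mathrm{Id}$ for all $Z\in\mathcal{Z}$. Here $\mathcal{Z}=\mathrm{span}\{e_{2n+1}\}$ and, for diagonal metrics, $\mathcal{V}=\mathrm{span}\{e_1,\dots,e_{2n}\}$; $j$ and norms are taken with respect to $g(t)$ at time $t$. *)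

(* Defs.v *)
From mathcomp Require Import all_boot all_order all_algebra.
From mathcomp Require Import all_classical all_reals all_analysis.
Unset Printing Implicit Defensive.
Import Order.TTheory GRing.Theory Num.Theory.
Local Open Scope ring_scope.

(* The Heisenberg algebra h_n = R^(2n+1), coordinates indexed 0 .. 2n
   (paper's e_{k+1} is our index k). *)
Notation hdim n := (n.*2).+1.
Notation hvec R n := 'rV[R]_(hdim n).

Definition hco {R : nzRingType} {n : nat} (X : hvec R n) (k : nat) : R :=
  X 0 (inord k).

Definition hbas {R : nzRingType} (n k : nat) : hvec R n := delta_mx 0 (inord k).

(* Lie bracket of h_n: the bilinear extension of
   [e_i, e_{n+i}] = - [e_{n+i}, e_i] = e_{2n}  (0 <= i < n), all others 0. *)
Definition heis_br {R : nzRingType} (n : nat) (X Y : hvec R n) : hvec R n :=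
  (\sum_(i < n) (hco X i * hco Y (n + i) - hco X (n + i) * hco Y i))
    *: hbas n n.*2.

Definition diag_ip {R : nzRingType} (n : nat) (g : 'I_(hdim n) -> R)
  (X Y : hvec R n) : R := \sum_(k < hdim n) g k * X 0 k * Y 0 k.

Definition in_center {R : nzRingType} {n : nat}
  (br : hvec R n -> hvec R n -> hvec R n) (Z : hvec R n) : Prop :=
  forall X, br Z X = 0.

Definition in_Vcompl {R : nzRingType} {n : nat}
  (ip : hvec R n -> hvec R n -> R) (br : hvec R n -> hvec R n -> hvec R n)
  (X : hvec R n) : Prop :=
  forall Z, in_center br Z -> ip X Z = 0.

(* j(Z) : V -> V is the (unique, by nondegeneracy of ip on V) map with
   <j(Z) X, Y> = <Z, [X,Y]> for X, Y in V.  Heisenberg type: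
   j(Z)^2 = -|Z|^2 Id on V for every Z in the center. *)
Definition is_jmap {R : nzRingType} {n : nat}
  (ip : hvec R n -> hvec R n -> R) (br : hvec R n -> hvec R n -> hvec R n)
  (Z : hvec R n) (J : hvec R n -> hvec R n) : Prop :=
  (forall X, in_Vcompl ip br X -> in_Vcompl ip br (J X)) /\
  (forall X Y, in_Vcompl ip br X -> in_Vcompl ip br Y ->
     ip (J X) Y = ip Z (br X Y)).

Definition heisenberg_type {R : nzRingType} {n : nat}
  (ip : hvec R n -> hvec R n -> R) (br : hvec R n -> hvec R n -> hvec R n)
  : Prop :=
  forall Z, in_center br Z ->
    exists J, is_jmap ip br Z J /\
      (forall X, in_Vcompl ip br X -> J (J X) = - (ip Z Z) *: X).

Definition rb_b {R : realType} (n : nat) (rho : R) (g0 : 'I_(hdim n) -> R) : R :=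
  (n%:R + 2 - n%:R * rho) * g0 (inord n.*2) / (g0 (inord 0) * g0 (inord n)).

Definition rb_sol {R : realType} (n : nat) (rho : R) (g0 : 'I_(hdim n) -> R)
  (t : R) (k : 'I_(hdim n)) : R :=
  let s := 1 + rb_b n rho g0 * t in
  if (k < n.*2)%N
  then g0 k * powR s ((1 - n%:R * rho) / (n%:R + 2 - n%:R * rho))
  else g0 k * powR s ((n%:R + n%:R * rho) / (n%:R * rho - n%:R - 2)).

(* Main.v *)
Require Import Defs.
From mathcomp Require Import all_boot all_order all_algebra.
From mathcomp Require Import all_classical all_reals all_analysis.
From mathcomp Require Import zify ring lra.
Import Order.TTheory GRing.Theory Num.Theory.
Local Open Scope ring_scope.

Lemma hco_bas {R : realType} n k j : (k < hdim n)%N -> (j < hdim n)%N ->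
  hco (hbas n k : hvec R n) j = (k == j)%:R.
Proof. by move=> hk hj; rewrite /hco /hbas mxE eqxx /= -val_eqE /= !inordK // eq_sym. Qed.

Lemma hco_scale {R : realType} n (a : R) (X : hvec R n) k : hco (a *: X) k = a * hco X k.
Proof. by rewrite /hco mxE. Qed.

Lemma hco0 {R : realType} n k : hco (0 : hvec R n) k = 0.
Proof. by rewrite /hco mxE. Qed.

Lemma ip_bas_r {R : realType} n g (X : hvec R n) j :
  diag_ip n g X (hbas n j) = g (inord j) * hco X j.
Proof.
rewrite /diag_ip (bigD1 (inord j)) //= big1 ?addr0.
  by rewrite /hbas mxE !eqxx mulr1.
by move=> k hk; rewrite /hbas mxE eqxx /= (negbTE hk) mulr0.
Qed.

Lemma ip_sym {R : realType} n g (X Y : hvec R n) : diag_ip n g X Y = diag_ip n g Y X.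
Proof. by apply: eq_bigr => k _; rewrite mulrAC. Qed.

Lemma ip_scale_r {R : realType} n g (X Y : hvec R n) a :
  diag_ip n g X (a *: Y) = a * diag_ip n g X Y.
Proof. by rewrite /diag_ip mulr_sumr; apply: eq_bigr => k _; rewrite mxE; ring. Qed.

Lemma sum_delta {R : realType} n (F : nat -> R) k : (k < n)%N ->
  \sum_(i < n) F i * (k == i)%:R = F k.
Proof.
move=> hk; rewrite (bigD1 (Ordinal hk)) //= eqxx mulr1 big1 ?addr0 //.
move=> i hi; have : k != i.
  by apply: contra hi => /eqP e; apply/eqP/val_inj.
by move/negbTE => ->; rewrite mulr0.
Qed.

Lemma br_hi {R : realType} n (X : hvec R n) k : (k < n)%N ->
  heis_br n X (hbas n (n + k)) = hco X k *: hbas n n.*2.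
Proof.
move=> hk; rewrite /heis_br; congr (_ *: _).
rewrite -(@sum_delta _ n (fun i => hco X i) k hk); apply: eq_bigr => i _.
have hi := ltn_ord i.
rewrite !hco_bas; try (rewrite -addnn; lia).
rewrite eqn_add2l; have -> : (n + k == i) = false by apply/negbTE; lia.
by rewrite mulr0 subr0.
Qed.

Lemma br_lo {R : realType} n (X : hvec R n) k : (k < n)%N ->
  heis_br n X (hbas n k) = - hco X (n + k) *: hbas n n.*2.
Proof.
move=> hk; rewrite /heis_br; congr (_ *: _).
rewrite -(@sum_delta _ n (fun i => hco X (n + i)) k hk) -sumrN; apply: eq_bigr => i _.
have hi := ltn_ord i.
rewrite !hco_bas; try (rewrite -addnn; lia).
have -> : (k == n + i) = false by apply/negbTE; lia.
by rewrite mulr0 sub0r.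
Qed.

Lemma br_top_l {R : realType} n (X : hvec R n) : heis_br n (hbas n n.*2) X = 0.
Proof.
rewrite /heis_br big1 ?scale0r // => i _.
have hi := ltn_ord i.
rewrite !hco_bas; try (rewrite -addnn; lia).
have -> : (n.*2 == i) = false by apply/negbTE; rewrite -addnn; lia.
have -> : (n.*2 == n + i) = false by apply/negbTE; rewrite -addnn; lia.
by rewrite !mul0r subr0.
Qed.

Lemma center_zero {R : realType} n (Z : hvec R n) k :
  in_center (heis_br n) Z -> (k < n.*2)%N -> hco Z k = 0.
Proof.
move=> hZ hk; have h2 : (n.*2 < hdim n)%N by [].
case: (ltnP k n) => hkn.
  have := hZ (hbas n (n + k)); rewrite br_hi // => /(congr1 (fun v => hco v n.*2)).
  by rewrite hco_scale hco_bas // eqxx mulr1 hco0.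
have hkn' : (k - n < n)%N by move: hk; rewrite -addnn; lia.
have := hZ (hbas n (k - n)); rewrite br_lo // => /(congr1 (fun v => hco v n.*2)).
rewrite hco_scale hco_bas // eqxx mulr1 hco0 subnKC // => /eqP.
by rewrite oppr_eq0 => /eqP.
Qed.

Lemma sum_split {R : realType} n (F : nat -> R) :
  \sum_(k < hdim n) F k = \sum_(i < n) (F i + F (n + i)) + F n.*2.
Proof.
rewrite -(big_mkord xpredT F) big_nat_recr //= -addnn.
rewrite (@big_cat_nat _ _ _ n) ?leq_addr //= big_split /=.
congr (_ + _ + _); first by rewrite big_mkord.
rewrite -{1}(add0n n) big_addn addnK big_mkord.
by apply: eq_bigr => i _; rewrite addnC.
Qed.

Lemma ip_split {R : realType} n g (X Y : hvec R n) : diag_ip n g X Y =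
  \sum_(i < n) (g (inord i) * hco X i * hco Y i
               + g (inord (n + i)) * hco X (n + i) * hco Y (n + i))
  + g (inord n.*2) * hco X n.*2 * hco Y n.*2.
Proof.
rewrite /diag_ip (eq_bigr (fun k : 'I_(hdim n) =>
   (fun m : nat => g (inord m) * hco X m * hco Y m) k)).
  by rewrite (sum_split n (fun m : nat => g (inord m) * hco X m * hco Y m)).
by move=> k _; rewrite /hco inord_val.
Qed.

Lemma ht_g0 {R : realType} n (g : 'I_(hdim n) -> R) :
  (forall k, 0 < g k) ->
  (forall i : 'I_n, g (inord n.*2) = g (inord i) * g (inord (n + i))) ->
  heisenberg_type (diag_ip n g) (heis_br n).
Proof.
move=> gp hg Z hZ.
set c := g (inord n.*2) * hco Z n.*2.
pose jf (X : hvec R n) (m : nat) : R :=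
  if (m < n)%N then - c * hco X (n + m) / g (inord m)
  else if (m < n.*2)%N then c * hco X (m - n) / g (inord m) else 0.
pose J (X : hvec R n) : hvec R n := \row_(k < hdim n) jf X k.
have hJ : forall X m, (m < hdim n)%N -> hco (J X) m = jf X m.
  by move=> X m hm; rewrite /hco /J mxE inordK.
have gnz : forall m, g (inord m) != 0 by move=> m; rewrite gt_eqF.
have VX : forall X, in_Vcompl (diag_ip n g) (heis_br n) X -> hco X n.*2 = 0.
  move=> X hX; have := hX _ (@br_top_l R n); rewrite ip_bas_r => /eqP.
  by rewrite mulf_eq0 (negbTE (gnz _)) /= => /eqP.
have J2n : forall X, jf X n.*2 = 0.
  move=> X; rewrite /jf ltnn.
  have -> : (n.*2 < n)%N = false by apply/negbTE; rewrite -leqNgt -addnn leq_addr.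
  by [].
have ZZ : diag_ip n g Z Z = c * hco Z n.*2.
  rewrite ip_split big1 ?add0r; first by rewrite /c.
  move=> i _; have hi := ltn_ord i.
  rewrite (@center_zero _ _ _ i hZ) ?(@center_zero _ _ _ (n + i) hZ);
    try (rewrite -addnn; lia).
  by rewrite !mulr0 addr0.
exists J; split; [split|].
- move=> X _ Z' hZ'.
  rewrite ip_split hJ // J2n mulr0 mul0r addr0 big1 // => i _.
  have hi := ltn_ord i.
  rewrite (@center_zero _ _ _ i hZ') ?(@center_zero _ _ _ (n + i) hZ');
    try (rewrite -addnn; lia).
  by rewrite !mulr0 addr0.
- move=> X Y hX hY.
  rewrite /heis_br ip_scale_r ip_bas_r -/c.
  rewrite ip_split hJ // J2n mulr0 mul0r addr0 mulr_suml.
  apply: eq_bigr => i _; have hi := ltn_ord i.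
  rewrite !hJ; try (rewrite -addnn; lia).
  rewrite /jf hi.
  have -> : (n + i < n)%N = false by apply/negbTE; lia.
  have -> : (n + i < n.*2)%N by rewrite -addnn ltn_add2l.
  rewrite addKn.
  by field; apply/andP; split; apply: gnz.
- move=> X hX; apply/rowP => k; rewrite !mxE ZZ.
  have -> : X 0 k = hco X k by rewrite /hco inord_val.
  have hk := ltn_ord k; move: hk; move: (nat_of_ord k) => m hm.
  rewrite /jf; case: (ltnP m n) => h1.
    rewrite hJ; last by rewrite -addnn; lia.
    rewrite /jf.
    have -> : (n + m < n)%N = false by apply/negbTE; lia.
    have -> : (n + m < n.*2)%N by rewrite -addnn ltn_add2l.
    rewrite addKn /c (hg (Ordinal h1)) /=.
    by field; apply/andP; split; apply: gnz.
  case: (ltnP m n.*2) => h2.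
    rewrite hJ; last by rewrite -addnn; lia.
    have h3 : (m - n < n)%N by move: h2; rewrite -addnn; lia.
    rewrite /jf h3 subnKC //.
    have := hg (Ordinal h3); rewrite /= subnKC // => e.
    rewrite /c e.
    by field; apply/andP; split; apply: gnz.
  have -> : m = n.*2 by move: hm h2; rewrite -addnn; lia.
  by rewrite (VX X hX) mulr0.
Qed.

Lemma ht_nec {R : realType} n (g : 'I_(hdim n) -> R) : (0 < n)%N ->
  g (inord n) != 0 -> g (inord n.*2) != 0 ->
  heisenberg_type (diag_ip n g) (heis_br n) ->
  g (inord n.*2) = g (inord 0) * g (inord n).
Proof.
move=> n0 gn g2 HT.
have [J [[JV Jip] JJ]] := HT _ (@br_top_l R n).
have h0 : (0 < hdim n)%N by [].
have hn : (n < hdim n)%N by rewrite -addnn; lia.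
have h2 : (n.*2 < hdim n)%N by [].
have V0 : in_Vcompl (diag_ip n g) (heis_br n) (hbas n 0).
  move=> Z hZ; rewrite ip_sym ip_bas_r (@center_zero _ _ _ 0 hZ) ?mulr0 //.
  by rewrite -addnn; lia.
have Vn : in_Vcompl (diag_ip n g) (heis_br n) (hbas n n).
  move=> Z hZ; rewrite ip_sym ip_bas_r (@center_zero _ _ _ n hZ) ?mulr0 //.
  by rewrite -addnn; lia.
have uV := JV _ V0.
have e1 := Jip _ _ V0 Vn.
have hb := @br_hi R n (hbas n 0) 0 n0; rewrite addn0 in hb.
rewrite hb ip_scale_r !ip_bas_r !hco_bas // !eqxx !mulr1 mul1r in e1.
have e2 := Jip _ _ uV V0.
rewrite (@br_lo R n _ 0 n0) addn0 (JJ _ V0) ip_sym !ip_scale_r !ip_bas_r in e2.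
rewrite !hco_bas // !eqxx !mulr1 in e2.
set u := hco (J (hbas n 0)) n in e1 e2.
have e3 : g (inord 0) = u.
  apply: (mulfI g2); apply: oppr_inj.
  by rewrite -mulNr e2 mulrC mulrN.
by rewrite e3 mulrC e1.
Qed.

Theorem proposition2p5 (R : realType) (n : nat) (rho : R)
  (g0 : 'I_(hdim n) -> R) :
  (0 < n)%N ->
  n%:R + 2 - n%:R * rho != 0 ->
  (forall k, 0 < g0 k) ->
  (forall i : 'I_n, g0 (inord n.*2) = g0 (inord i) * g0 (inord (n + i))) ->
  heisenberg_type (diag_ip n g0) (heis_br n) /\
  (forall t : R, t != 0 -> 0 < 1 + rb_b n rho g0 * t ->
     ~ heisenberg_type (diag_ip n (rb_sol n rho g0 t)) (heis_br n)).
Proof.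
move=> n0 D0 gp hg; split; first exact: ht_g0.
move=> t t0 s0 HT.
have gpos k : 0 < rb_sol n rho g0 t k.
  by rewrite /rb_sol; case: ifP => _; rewrite mulr_gt0 // powR_gt0.
have := @ht_nec R n (rb_sol n rho g0 t) n0.
rewrite !gt_eqF // => /(_ isT isT HT).
have h0 : (0 < hdim n)%N by [].
have hn : (n < hdim n)%N by rewrite -addnn; lia.
have h2 : (n.*2 < hdim n)%N by [].
have hn2 : (n < n.*2)%N by rewrite -addnn; lia.
have h02 : (0 < n.*2)%N by rewrite -addnn; lia.
rewrite /rb_sol /= !inordK // ltnn hn2 h02.
set s := 1 + rb_b n rho g0 * t.
set a := (1 - n%:R * rho) / (n%:R + 2 - n%:R * rho).
set c := (n%:R + n%:R * rho) / (n%:R * rho - n%:R - 2).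
have := hg (Ordinal n0); rewrite /= addn0 => e0.
rewrite e0 => e.
have e' : s `^ c = s `^ a * s `^ a.
  have g00 : g0 (inord 0) * g0 (inord n) != 0 by rewrite mulf_neq0 // gt_eqF.
  apply: (mulfI g00); rewrite e; ring.
have D1 : n%:R * rho - n%:R - 2 != 0 :> R.
  rewrite -oppr_eq0.
  have -> : - (n%:R * rho - n%:R - 2) = n%:R + 2 - n%:R * rho :> R by ring.
  exact: D0.
have eac : a + a = c + 1 by rewrite /a /c; field; apply/andP; split.
have sp : s != 0 by rewrite gt_eqF.
rewrite -powRD ?sp ?implybT // eac powRD ?sp ?implybT // powRr1 ?ltW // in e'.
have s1 : s = 1.
  have sc : s `^ c != 0 by rewrite gt_eqF // powR_gt0.
  by apply: (mulfI sc); rewrite mulr1 -e'.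
move: s1; rewrite /s => /eqP; rewrite addrC -subr_eq0 addrK mulf_eq0.
rewrite (negbTE t0) orbF /rb_b.
apply/negP; rewrite !mulf_neq0 ?invr_neq0 ?mulf_neq0 ?(gt_eqF (gp _)) //.
Qed.
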